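(* For $z\in(0,1)$ and $\rho>-1$ define $$g(z,\rho)=\frac{\rho}{1+\rho}+\frac{1-z+z^{1/(1+\rho)}-z^{\rho/(1+\rho)}}{(1+z)\ln z}.$$ Then $g(z,\rho)\ge0$ for all $z\in(0,1)$ and all $\rho>-1$.
   Context: $\ln$ denotes the natural logarithm. *)

(* Defs.v *)
From Stdlib Require Import Reals.
Open Scope R_scope.

Definition g (z rho : R) : R :=
  rho / (1 + rho)
  + (1 - z + Rpower z (1 / (1 + rho)) - Rpower z (rho / (1 + rho)))
    / ((1 + z) * ln z).

(* Main.v *)
Require Import Defs.
From Stdlib Require Import Reals Lra.
From Coquelicot Require Import Coquelicot.
Open Scope R_scope.

Definition phi (z w : R) := (1+z)*ln w - (1 - z + z*w - /w).
Definition phi' (z w : R) := (1+z)/w - z - /(w*w).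

Lemma phi_der z c : 0 < c -> derivable_pt_lim (phi z) c (phi' z c).
Proof.
  intros Hc. apply is_derive_Reals. unfold phi, phi'.
  auto_derive. { lra. }
  field. lra.
Qed.

Lemma phi_nonneg z w : 0 < z < 1 -> 0 < w -> z*w < 1 -> 0 <= phi z w.
Proof.
  intros Hz Hw Hzw.
  assert (H1 : phi z 1 = 0) by (unfold phi; rewrite ln_1; field).
  destruct (Rtotal_order w 1) as [Hlt|[Heq|Hgt]].
  - destruct (MVT_cor2 (phi z) (phi' z) w 1 Hlt) as [c [Hc1 Hc2]].
    { intros c Hc. apply phi_der. lra. }
    assert (Hd : phi' z c <= 0).
    { unfold phi'. assert (0 < c) by lra.
      replace ((1 + z) / c - z - / (c * c)) with (- ((z*c - 1)*(c-1)) / (c*c)) by (field; lra).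
      assert (0 < / (c*c)) by (apply Rinv_0_lt_compat; nra).
      assert (z*c < 1) by nra.
      assert (0 <= (z*c - 1)*(c-1)) by nra.
      unfold Rdiv. nra. }
    assert (phi' z c * (1 - w) <= 0) by nra.
    lra.
  - subst. lra.
  - destruct (MVT_cor2 (phi z) (phi' z) 1 w Hgt) as [c [Hc1 Hc2]].
    { intros c Hc. apply phi_der. lra. }
    assert (Hd : 0 <= phi' z c).
    { unfold phi'. assert (0 < c) by lra.
      replace ((1 + z) / c - z - / (c * c)) with (- ((z*c - 1)*(c-1)) / (c*c)) by (field; lra).
      unfold Rdiv. apply Rmult_le_pos.
      { assert (z*c < 1) by nra. nra. }
      apply Rlt_le, Rinv_0_lt_compat. nra. }
    assert (0 <= phi' z c * (w - 1)) by (apply Rmult_le_pos; lra).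
    lra.
Qed.

Theorem mainTheorem3 : forall z rho : R, 0 < z < 1 -> -1 < rho -> 0 <= g z rho.
Proof.
  intros z rho Hz Hr. unfold g, Rpower.
  set (L := ln z).
  assert (HL : L < 0) by (unfold L; rewrite <- ln_1; apply ln_increasing; lra).
  set (b := rho / (1 + rho)).
  assert (Hb : 1 / (1 + rho) = 1 - b) by (unfold b; field; lra).
  assert (Hb1 : 0 < 1 - b) by (rewrite <- Hb; apply Rdiv_lt_0_compat; lra).
  rewrite Hb.
  set (w := exp (- (b * L))).
  assert (Hw : 0 < w) by apply exp_pos.
  assert (E1 : exp ((1 - b) * L) = z * w).
  { unfold w. replace ((1 - b) * L) with (L + - (b*L)) by ring.
    rewrite exp_plus. unfold L. rewrite exp_ln; lra. }
  assert (E2 : exp (b * L) = / w).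
  { unfold w. rewrite exp_Ropp, Rinv_inv. reflexivity. }
  assert (E3 : ln w = - (b * L)) by (unfold w; apply ln_exp).
  assert (Hzw : z * w < 1).
  { rewrite <- E1. assert (Hn : (1 - b) * L < 0) by nra. pose proof (exp_increasing _ _ Hn) as He. rewrite exp_0 in He. exact He. }
  pose proof (phi_nonneg z w Hz Hw Hzw) as P. unfold phi in P. rewrite E3 in P.
  rewrite E1, E2.
  set (N := 1 - z + z * w - / w) in *.
  assert (HD : (1 + z) * L < 0) by nra.
  replace (b + N / ((1 + z) * L)) with ((-(b * ((1+z)*L) + N)) * / (- ((1 + z) * L)))
    by (field; lra).
  apply Rmult_le_pos.
  - nra.
  - apply Rlt_le, Rinv_0_lt_compat. lra.
Qed.
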